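(* Let $\kappa\in\mathbb{N}$, $\eta\in\{2,3,\ldots\}\cup\{\infty\}$ and let $\pmb{\lambda}=\{\lambda_{-k}\}_{k=0}^{\kappa-1}\cup\{\lambda_{i,j}\}_{i,j=1}^{\eta,\infty}\subset(0,\infty)$ with $\lambda_{i,j}>1$ for $i\in\mathbb{N}\cap[1,\eta]$, $j\ge2$. If the weighted shift $S_{\pmb{\lambda}}\in\mathbf{B}(\ell^2(V_{\eta,\kappa}))$ is completely hyperexpansive and $r$-generation flat for some $r\ge3$, then $S_{\pmb{\lambda}}$ is $2$-generation flat.
   Context: $\mathcal{T}_{\eta,\kappa}$ is the directed tree with vertices $V_{\eta,\kappa}=\{-k:k\in\mathbb{N}\cap[0,\kappa]\}\sqcup\{(i,j):i\in\mathbb{N}\cap[1,\eta],j\ge1\}$ and edges $(-k,-k+1)$ ($1\le k\le\kappa$), $(0,(i,1))$, $((i,j),(i,j+1))$; the weighted shift with weights $\pmb{\lambda}$ is the bounded operator $S_{\pmb{\lambda}}e_v=\sum_{u\text{ child of }v}\lambda_ue_u$ (weight $\lambda_{-k}$ sits at vertex $-k$, $\lambda_{i,j}$ at $(i,j)$). $S_{\pmb{\lambda}}$ is $r$-generation flat if $\lambda_{i,j}=\lambda_{1,j}$ for all $j\ge r$ and $i\in\mathbb{N}\cap[1,\eta]$. A real sequence $(a_k)_{k\ge0}$ is completely alternating if $\sum_{k=0}^n(-1)^k\binom nk a_{k+m}\le0$ for all $m\ge0,n\ge1$; an operator $T$ is completely hyperexpansive if $(\|T^nf\|^2)_{n\ge0}$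 is completely alternating for every vector $f$. *)

(* Defs.v *)
From HB Require Import structures.
From mathcomp Require Import all_boot all_order all_algebra.
From mathcomp Require Import all_classical all_reals.
From mathcomp Require Import ereal esum.
From mathcomp Require Import all_classical.
Set Implicit Arguments. Unset Strict Implicit. Unset Printing Implicit Defensive.
Import Order.TTheory GRing.Theory Num.Theory.
Local Open Scope ring_scope.
Local Open Scope classical_set_scope.

(* Vertices of T_{eta,kappa}: [VT k] is the vertex -k, [VB i j] is (i,j). *)
Definition vert : choiceType := (nat + nat * nat)%type.
Definition VT (k : nat) : vert := inl k.
Definition VB (i j : nat) : vert := inr (i, j).

(* eta : option nat, [None] meaning eta = infinity. *)
Definition eta_le (eta : option nat) (i : nat) : bool :=
  if eta is Some n then (i <= n)%N else true.

Definition inV (eta : option nat) (kappa : nat) (v : vert) : bool :=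
  match v with
  | inl k => (k <= kappa)%N
  | inr (i, j) => [&& (1 <= i)%N, eta_le eta i & (1 <= j)%N]
  end.

Definition Vset (eta : option nat) (kappa : nat) : set vert :=
  [set v | inV eta kappa v].

(* The weighted shift S_lambda acting on functions V -> R:
   (S f)(u) = lambda_u f(parent u), and (S f)(root) = 0.
   lamT k = lambda_{-k} (0 <= k < kappa), lamB i j = lambda_{i,j}. *)
Definition wshift (R : realType) (eta : option nat) (kappa : nat)
  (lamT : nat -> R) (lamB : nat -> nat -> R) (f : vert -> R) (v : vert) : R :=
  if ~~ inV eta kappa v then 0 else
  match v with
  | inl k => if (k < kappa)%N then lamT k * f (VT k.+1) else 0
  | inr (i, j) => if j == 1%N then lamB i 1%N * f (VT 0)
              else lamB i j * f (VB i j.-1)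
  end.

Definition sqnorm (R : realType) (eta : option nat) (kappa : nat)
  (f : vert -> R) : \bar R :=
  \esum_(v in Vset eta kappa) ((f v) ^+ 2)%:E.

Definition in_l2 (R : realType) eta kappa (f : vert -> R) : Prop :=
  (sqnorm eta kappa f < +oo)%E.

Definition wshift_bounded (R : realType) eta kappa lamT lamB : Prop :=
  exists C : R, forall f : vert -> R, in_l2 eta kappa f ->
    (sqnorm eta kappa (@wshift R eta kappa lamT lamB f)
       <= C%:E * sqnorm eta kappa f)%E.

Definition completely_alternating (R : realType) (a : nat -> R) : Prop :=
  forall m n : nat, (1 <= n)%N ->
    \sum_(0 <= k < n.+1) (-1) ^+ k * ('C(n, k))%:R * a (k + m)%N <= 0.

Definition wshift_CHE (R : realType) eta kappa lamT lamB : Prop :=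
  forall f : vert -> R, in_l2 eta kappa f ->
    completely_alternating
      (fun n => fine (sqnorm eta kappa (iter n (@wshift R eta kappa lamT lamB) f))).

Definition gen_flat (R : realType) (eta : option nat) (lamB : nat -> nat -> R)
  (r : nat) : Prop :=
  forall i j : nat, (r <= j)%N -> (1 <= i)%N -> eta_le eta i ->
    lamB i j = lamB 1%N j.

(* Main.v *)
Require Import Defs.
From HB Require Import structures.
From mathcomp Require Import all_boot all_order all_algebra.
From mathcomp Require Import all_classical all_reals.
From mathcomp Require Import ereal esum.
From mathcomp Require Import ring lra.
Import Order.TTheory GRing.Theory Num.Theory.
Local Open Scope ring_scope.

Section SeqPart.
Variable R : realType.
Implicit Types (a b : nat -> R).

Fixpoint TT a (k m : nat) : R :=
  match k with 0 => a m | k'.+1 => TT a k' m - TT a k' m.+1 end.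

Lemma TT_sum a n m : TT a n m =
  \sum_(0 <= j < n.+1) (-1) ^+ j * ('C(n, j))%:R * a (j + m)%N.
Proof.
elim: n m => [|n IH] m.
  by rewrite big_nat1 expr0 bin0 !mul1r add0n.
rewrite /= !IH.
rewrite big_nat_recl //= expr0 bin0 !mul1r add0n.
rewrite (_ : \sum_(0 <= i < n.+1) (-1) ^+ i.+1 * 'C(n.+1, i.+1)%:R * a (i.+1 + m)%N
  = \sum_(0 <= i < n.+1) (-1) ^+ i.+1 * 'C(n, i.+1)%:R * a (i.+1 + m)%N
  + \sum_(0 <= i < n.+1) (-1) ^+ i.+1 * 'C(n, i)%:R * a (i.+1 + m)%N); last first.
  by rewrite -big_split; apply: eq_bigr => i _; rewrite binS natrD /=; ring.
rewrite (_ : \sum_(0 <= i < n.+1) (-1) ^+ i.+1 * 'C(n, i)%:R * a (i.+1 + m)%N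
   = - \sum_(0 <= j < n.+1) (-1) ^+ j * ('C(n, j))%:R * a (j + m.+1)%N); last first.
  rewrite -sumrN; apply: eq_bigr => j _.
  by rewrite exprS addSnnS; ring.
rewrite [X in X - _ = _]big_nat_recl // expr0 bin0 !mul1r add0n.
rewrite [X in _ = _ + (X + _)]big_nat_recr //= bin_small // mulr0 mul0r addr0.
ring.
Qed.

Definition DD a k m := - TT a k.+1 m.

Lemma DD_rec a k m : DD a k.+1 m = DD a k m - DD a k m.+1.
Proof. by rewrite /DD /=; ring. Qed.

Lemma TT_ext a b k m : (forall n, a n = b n) -> TT a k m = TT b k m.
Proof. by move=> e; elim: k m => [|k IH] m /=; rewrite ?e ?IH. Qed.

Lemma TT_shift a k m : TT (fun n => a n.+1) k m = TT a k m.+1.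
Proof. by elim: k m => [|k IH] m //=; rewrite !IH. Qed.

Lemma TT_lin3 a b c p q k m :
  TT (fun n => p * a n + q * b n + c n) k m = p * TT a k m + q * TT b k m + TT c k m.
Proof. by elim: k m => [|k IH] m //=; rewrite !IH; ring. Qed.

Lemma TT_sub a b c k m :
  TT (fun n => a n - c * b n) k m = TT a k m - c * TT b k m.
Proof. by elim: k m => [|k IH] m //=; rewrite !IH; ring. Qed.

Lemma TT_tail a N k m : (forall n, (N <= n)%N -> a n = 0) -> (N <= m)%N -> TT a k m = 0.
Proof.
move=> H; elim: k m => [|k IH] m Hm /=; first exact: H.
by rewrite IH // IH ?subr0 // (leq_trans Hm).
Qed.

Definition CA a := forall k m, 0 <= DD a k m.

Lemma CA_of a : (forall m n : nat, (1 <= n)%N ->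
    \sum_(0 <= k < n.+1) (-1) ^+ k * ('C(n, k))%:R * a (k + m)%N <= 0) -> CA a.
Proof. by move=> H k m; rewrite /DD oppr_ge0 TT_sum; apply: H. Qed.

Lemma DD_monom a : CA a -> forall k m, DD a k m.+1 <= DD a k m.
Proof. move=> H k m; have := H k.+1 m; rewrite DD_rec; lra. Qed.

Lemma DD_le0 a : CA a -> forall k m, DD a k m <= DD a k 0.
Proof.
move=> H k; elim=> [|m IH] //; apply: le_trans IH; exact: DD_monom.
Qed.

Lemma DD_bound a : CA a -> forall K, K.+1%:R * DD a K 1 <= DD a 0 0.
Proof.
move=> H K.
suff : K.+1%:R * DD a K 1 + DD a K.+1 0 <= DD a 0 0.
  by have := H K.+1 0%N; lra.
elim: K => [|K IH].
  by rewrite DD_rec mul1r; lra.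
have h1 := DD_monom _ H K.+1 0; have h2 := H K.+1 1%N.
rewrite (DD_rec a K.+1 0).
have h3 : DD a K.+1 1 <= DD a K 1 by have := H K 2%N; have := DD_rec a K 1; lra.
rewrite -[K.+2]addn1 natrD mulrDl mul1r.
have : K.+1%:R * DD a K.+1 1 <= K.+1%:R * DD a K 1 by rewrite ler_wpM2l.
lra.
Qed.

Lemma small0 (y M : R) : 0 <= y -> (forall k : nat, k.+1%:R * y <= M) -> y = 0.
Proof.
move=> y0 H; apply/eqP; rewrite eq_le y0 andbT; apply/negP => /negP.
rewrite -ltNge => yp.
have M0 : 0 <= M / y by rewrite divr_ge0 //; apply: le_trans (H 0%N); rewrite mul1r ltW.
have := archi_boundP M0; set k := Num.bound _ => hk.
have := H k; rewrite ltr_pdivrMr // in hk.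
rewrite -[k.+1]addn1 natrD mulrDl mul1r.
lra.
Qed.

Lemma core (x b1 bi z : nat -> R) (u1 ui c : R) (N : nat) :
  CA x -> CA b1 -> CA bi -> CA z -> 0 < u1 -> 0 < ui ->
  (forall n, x n.+1 = u1 * b1 n + ui * bi n + z n) ->
  b1 0%N = 1 -> bi 0%N = 1 ->
  (forall n, (N <= n)%N -> bi n = c * b1 n) ->
  forall n, bi n = b1 n.
Proof.
move=> Cx C1 Ci Cz u1p uip Hx b10 bi0 Ht.
have Hd : forall k, DD x k 1 = u1 * DD b1 k 0 + ui * DD bi k 0 + DD z k 0.
  move=> k; rewrite /DD -TT_shift (TT_ext _ _ _ _ Hx) TT_lin3; ring.
set B := DD x 0 0.
have Bi : forall k m, k.+1%:R * (ui * DD bi k m) <= B.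
  move=> k m; apply: le_trans (DD_bound _ Cx k); rewrite Hd ler_wpM2l //.
  have := Cz k 0%N; have := C1 k 0%N; have := DD_le0 _ Ci k m.
  have : 0 <= u1 by lra.
  move=> u10 h1 h2 h3; have : 0 <= u1 * DD b1 k 0 by rewrite mulr_ge0.
  have : ui * DD bi k m <= ui * DD bi k 0 by rewrite ler_wpM2l // ltW.
  lra.
have B1 : forall k m, k.+1%:R * (u1 * DD b1 k m) <= B.
  move=> k m; apply: le_trans (DD_bound _ Cx k); rewrite Hd ler_wpM2l //.
  have := Cz k 0%N; have := Ci k 0%N; have := DD_le0 _ C1 k m.
  move=> h1 h2 h3; have : 0 <= ui * DD bi k 0 by rewrite mulr_ge0 // ltW.
  have : u1 * DD b1 k m <= u1 * DD b1 k 0 by rewrite ler_wpM2l // ltW.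
  lra.
pose e n := bi n - c * b1 n.
have De : forall k m, DD e k m = DD bi k m - c * DD b1 k m.
  by move=> k m; rewrite /DD TT_sub; ring.
have Dtail : forall k m, (N <= m)%N -> DD e k m = 0.
  move=> k m Hm; rewrite /DD (@TT_tail _ N) ?oppr0 // => n Hn.
  by rewrite /e Ht // subrr.
have Dbd : forall k m, k.+1%:R * `|DD e k m| <= B / ui + `|c| * (B / u1).
  move=> k m; rewrite De.
  have h1 := Bi k m; have h2 := B1 k m.
  have n1 : 0 <= k.+1%:R :> R by [].
  have a1 : k.+1%:R * DD bi k m <= B / ui.
    rewrite ler_pdivlMr //; by have -> : k.+1%:R * DD bi k m * ui = k.+1%:R * (ui * DD bi k m) by ring.
  have a2 : k.+1%:R * DD b1 k m <= B / u1.
    rewrite ler_pdivlMr //; by have -> : k.+1%:R * DD b1 k m * u1 = k.+1%:R * (u1 * DD b1 k m) by ring.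
  have p1 : 0 <= DD bi k m := Ci k m.
  have p2 : 0 <= DD b1 k m := C1 k m.
  apply: le_trans (_ : k.+1%:R * (DD bi k m + `|c| * DD b1 k m) <= _).
    rewrite ler_wpM2l //; apply: le_trans (ler_normB _ _) _.
    by rewrite normrM (ger0_norm p1) (ger0_norm p2).
  rewrite mulrDr; apply: lerD => //.
  rewrite mulrCA; apply: ler_wpM2l => //.
have D0 : forall d m, (N <= m + d)%N -> forall k, DD e k m = 0.
  elim=> [|d IH] m Hm k; first by apply: Dtail; rewrite addn0 in Hm.
  have H1 : forall k, DD e k m.+1 = 0 by apply: IH; rewrite addSnnS.
  have Hc : forall k, DD e k m = DD e 0 m.
    by elim=> [|k' IHk] //; rewrite DD_rec H1 subr0.
  rewrite Hc; apply/normr0_eq0; apply: (@small0 _ (B / ui + `|c| * (B / u1))) => //.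
  by move=> k'; rewrite -(Hc k').
have Es : forall n, e n = e 0%N.
  elim=> [|n IH] //; rewrite -IH.
  have := D0 N n (leq_addl _ _) 0%N; rewrite /DD /=; lra.
have eN : e N = 0 by rewrite /e Ht // subrr.
have c1 : c = 1.
  have := Es N; rewrite eN /e bi0 b10 mulr1; lra.
move=> n; have := Es n; rewrite /e bi0 b10 c1 !mul1r subrr; lra.
Qed.

End SeqPart.
Arguments CA {R}.

Section Tree.
Variables (R : realType) (kappa : nat) (eta : option nat)
  (lamT : nat -> R) (lamB : nat -> nat -> R).
Local Notation S := (wshift eta kappa lamT lamB).

Definition ev (v0 : vert) : vert -> R := fun v => if v == v0 then 1 else 0.

Lemma sqnorm_single a v0 : inV eta kappa v0 ->
  sqnorm eta kappa (fun v => a * ev v0 v) = (a ^+ 2)%:E.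
Proof.
move=> Hv0; rewrite /sqnorm.
transitivity (\esum_(v in [set v0]) ((a * ev v0 v) ^+ 2)%:E).
  rewrite esum_mkcond [RHS]esum_mkcond; apply: eq_esum => v _.
  have [->|ne] := eqVneq v v0.
    by rewrite (@mem_set _ (Vset eta kappa) v0) // (@mem_set _ [set v0] v0).
  rewrite /ev (negbTE ne) mulr0 expr0n /=.
  by case: (v \in Vset eta kappa); case: (v \in [set v0]%classic).
by rewrite esum_set1 ?lee_fin ?sqr_ge0 // /ev eqxx mulr1.
Qed.

Lemma S_add f g : S (fun v => f v + g v) = (fun v => S f v + S g v).
Proof.
apply/funext => v; rewrite /wshift; case: ifP => _; first by rewrite addr0.
case: v => [k|[i j]]; first by case: ifP => _; rewrite ?mulrDr ?addr0.
by case: ifP => _; rewrite mulrDr.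
Qed.

Lemma iter_add n f g : iter n S (fun v => f v + g v) = (fun v => iter n S f v + iter n S g v).
Proof. by elim: n => [|n IH] //=; rewrite IH S_add. Qed.

Lemma S_branch a i j : (1 <= i)%N -> eta_le eta i -> (1 <= j)%N ->
  S (fun v => a * ev (VB i j) v) = (fun v => (a * lamB i j.+1) * ev (VB i j.+1) v).
Proof.
move=> Hi He Hj; apply/funext => v; rewrite /wshift /ev.
case Hv: (inV eta kappa v) => /=; last first.
  case: eqP => [E|]; last by rewrite mulr0.
  by move: Hv; rewrite E /= Hi He.
case: v Hv => [k|[i' j']] /= Hv.
  by case: ifP => _; rewrite !mulr0.
case: j' Hv => [|[|j3]] Hv /=; first by case/and3P: Hv.
  rewrite (_ : (inr (i', 1%N) == VB i j.+1) = false) ?mulr0 //.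
  by apply/eqP => -[_ E]; rewrite -E in Hj.
case E1: (VB i' j3.+1 == VB i j); case E2: (inr (i', j3.+2) == VB i j.+1).
- by move/eqP: E2 => -[-> ->]; rewrite !mulr1 mulrC.
- by move/eqP: E1 => -[e1 e2]; move/eqP: E2; rewrite e1 e2.
- by move/eqP: E2 => -[e1 e2]; move/eqP: E1; rewrite e1; case: e2 => ->.
- by rewrite !mulr0.
Qed.


Fixpoint pp i n : R := match n with 0 => 1 | n'.+1 => lamB i n'.+2 * pp i n' end.

Lemma iter_branch a i n : (1 <= i)%N -> eta_le eta i ->
  iter n S (fun v => a * ev (VB i 1) v) = (fun v => (a * pp i n) * ev (VB i n.+1) v).
Proof.
move=> Hi He; elim: n => [|n IH] /=; first by apply/funext => v; rewrite mulr1.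
rewrite IH S_branch //; apply/funext => v; congr (_ * _); rewrite /=; ring.
Qed.

Definition zone i (v : vert) : bool :=
  match v with inl _ => true | inr (i', _) => (i' == 1%N) || (i' == i) end.

Definition Pz i (f : vert -> R) := forall v, zone i v -> f v = 0.

Lemma S_Pz i f : Pz i f -> Pz i (S f).
Proof.
move=> H v zv; rewrite /wshift; case: ifP => _ //.
case: v zv => [k|[i' j']] zv.
  by case: ifP => _ //; rewrite H ?mulr0.
by case: ifP => _; rewrite H ?mulr0.
Qed.

Lemma iter_Pz i n f : Pz i f -> Pz i (iter n S f).
Proof. by move=> H; elim: n => [|n IH] //=; apply: S_Pz. Qed.

Lemma sqnorm_ge0 (f : vert -> R) : (0 <= sqnorm eta kappa f)%E.
Proof. by apply: esum_ge0 => v _; rewrite lee_fin sqr_ge0. Qed.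

Lemma sqnorm3 i m c1 ci g : (1 <= i)%N -> eta_le eta i -> eta_le eta 1 -> i != 1%N ->
  (1 <= m)%N -> Pz i g ->
  sqnorm eta kappa (fun v => c1 * ev (VB 1 m) v + ci * ev (VB i m) v + g v)
  = ((c1 ^+ 2)%:E + (ci ^+ 2)%:E + sqnorm eta kappa g)%E.
Proof.
move=> Hi He He1 ni Hm Hg.
rewrite -(@sqnorm_single c1 (VB 1 m)); last by rewrite /= He1 Hm.
rewrite -(@sqnorm_single ci (VB i m)); last by rewrite /= Hi He Hm.
rewrite /sqnorm -!esumD; last 4 first.
all: try by move=> v _; first [apply: adde_ge0; rewrite lee_fin sqr_ge0 | rewrite lee_fin sqr_ge0].
apply: eq_esum => v _; rewrite -!EFinD; congr (_%:E).
rewrite /ev; case E1: (v == VB 1 m); case E2: (v == VB i m).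
- by move/eqP: E1 => e1; move: E2; rewrite e1 => /eqP [e]; rewrite -e eqxx in ni.
- by rewrite (Hg v); [ring | rewrite (eqP E1) /= ?eqxx ?orbT].
- by rewrite (Hg v); [ring | rewrite (eqP E2) /= ?eqxx ?orbT].
- by rewrite !mulr0; ring.
Qed.


Definition hh i : vert -> R := fun v =>
  S (ev (VT 0)) v - lamB 1 1 * ev (VB 1 1) v - lamB i 1 * ev (VB i 1) v.

Lemma hh_Pz i : (1 <= i)%N -> eta_le eta i -> eta_le eta 1 -> i != 1%N -> Pz i (hh i).
Proof.
move=> Hi He He1 ni v zv; rewrite /hh /wshift /ev.
case Hv: (inV eta kappa v) => /=; last first.
  case E1: (v == VB 1 1); first by move: Hv; rewrite (eqP E1) /= He1.
  case E2: (v == VB i 1); first by move: Hv; rewrite (eqP E2) /= Hi He.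
  by rewrite !mulr0 !subr0.
case: v zv Hv => [k|[i' [|[|j3]]]] /= zv Hv.
- by case: ifP => _; rewrite ?mulr0 !subr0.
- by case/and3P: Hv.
- case E1: (inr (i', 1%N) == VB 1 1); case E2: (inr (i', 1%N) == VB i 1).
  + move/eqP: E1 => -[e1]; move/eqP: E2 => -[e2].
    by rewrite -e2 e1 eqxx in ni.
  + by move/eqP: E1 => -[->]; ring.
  + by move/eqP: E2 => -[->]; ring.
  + by case/orP: zv => /eqP e; [rewrite e eqxx in E1 | rewrite e eqxx in E2].
- case E1: (inr (i', j3.+2) == VB 1 1); first by move/eqP: E1 => -[].
  case E2: (inr (i', j3.+2) == VB i 1); first by move/eqP: E2 => -[].
  by ring.
Qed.


Lemma l2_S (f : vert -> R) : wshift_bounded eta kappa lamT lamB -> in_l2 eta kappa f ->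
  in_l2 eta kappa (S f).
Proof.
move=> [C HC] Hf.
have fin : sqnorm eta kappa f \is a fin_num by rewrite ge0_fin_numE // sqnorm_ge0.
rewrite /in_l2; apply: le_lt_trans (HC f Hf) _.
by rewrite -(fineK fin) -EFinM ltry.
Qed.

Lemma l2_iter n (f : vert -> R) : wshift_bounded eta kappa lamT lamB -> in_l2 eta kappa f ->
  in_l2 eta kappa (iter n S f).
Proof. by move=> Hb Hf; elim: n => [|n IH] //=; apply: l2_S. Qed.

Lemma ev_mul1 v0 : ev v0 = (fun v => 1 * ev v0 v).
Proof. by apply/funext => v; rewrite mul1r. Qed.

Lemma ev_l2 v0 : inV eta kappa v0 -> in_l2 eta kappa (ev v0).
Proof. by move=> H; rewrite /in_l2 ev_mul1 sqnorm_single // ltry. Qed.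

Lemma x_decomp i n : (1 <= i)%N -> eta_le eta i -> eta_le eta 1 -> i != 1%N ->
  sqnorm eta kappa (iter n.+1 S (ev (VT 0)))
  = (((lamB 1 1 * pp 1 n) ^+ 2)%:E + ((lamB i 1 * pp i n) ^+ 2)%:E
     + sqnorm eta kappa (iter n S (hh i)))%E.
Proof.
move=> Hi He He1 ni; rewrite iterSr.
have -> : S (ev (VT 0)) = (fun v => (lamB 1 1 * ev (VB 1 1) v + lamB i 1 * ev (VB i 1) v) + hh i v).
  by apply/funext => v; rewrite /hh; ring.
rewrite iter_add iter_add !iter_branch //.
rewrite sqnorm3 //; apply: iter_Pz; exact: hh_Pz.
Qed.

Lemma pp_pos i n : (forall i j : nat, (1 <= i)%N -> eta_le eta i -> (1 <= j)%N -> 0 < lamB i j) ->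
  (1 <= i)%N -> eta_le eta i -> 0 < pp i n.
Proof. by move=> HB Hi He; elim: n => [|n IH] //=; rewrite mulr_gt0 // HB. Qed.

End Tree.
Arguments ev {R}.
Arguments pp {R}.
Arguments hh {R}.

Lemma fin_of3 (R : realType) (a b : R) (c : \bar R) :
  (a%:E + b%:E + c < +oo)%E -> (0 <= c)%E -> c \is a fin_num.
Proof. by case: c. Qed.

Theorem theorem9p3 (R : realType) (kappa : nat) (eta : option nat)
  (lamT : nat -> R) (lamB : nat -> nat -> R) :
  (if eta is Some n then (2 <= n)%N else true) ->
  (forall k : nat, (k < kappa)%N -> 0 < lamT k) ->
  (forall i j : nat, (1 <= i)%N -> eta_le eta i -> (1 <= j)%N -> 0 < lamB i j) ->
  (forall i j : nat, (1 <= i)%N -> eta_le eta i -> (2 <= j)%N -> 1 < lamB i j) ->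
  wshift_bounded eta kappa lamT lamB ->
  wshift_CHE eta kappa lamT lamB ->
  (exists r : nat, (3 <= r)%N /\ gen_flat eta lamB r) ->
  gen_flat eta lamB 2.
Proof.
move=> Heta HT HB HB1 Hbd Hche [r [Hr Hflat]] i j Hj Hi Hie.
have He1 : eta_le eta 1 by case: eta Heta Hie Hbd Hche Hflat HB HB1 => //= n; case: n.
have [->//|ni] := eqVneq i 1%N.
pose S := wshift eta kappa lamT lamB.
pose b := fun i n => fine (sqnorm eta kappa (iter n S (ev (VB i 1)))).
have bE : forall i, (1 <= i)%N -> eta_le eta i -> forall n, b i n = (pp lamB i n) ^+ 2.
  move=> i' Hi' He' n; rewrite /b ev_mul1 iter_branch // sqnorm_single /=; last first.
    by rewrite Hi' He'.
  by rewrite mul1r.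
have CAb : forall i, (1 <= i)%N -> eta_le eta i -> CA (b i).
  move=> i' Hi' He'; apply: CA_of; apply: Hche; apply: ev_l2; by rewrite /= Hi' He'.
pose x := fun n => fine (sqnorm eta kappa (iter n S (ev (VT 0)))).
have CAx : CA x by apply: CA_of; apply: Hche; apply: ev_l2.
pose z := fun n => fine (sqnorm eta kappa (iter n S (hh kappa eta lamT lamB i))).
have finz : forall n, sqnorm eta kappa (iter n S (hh kappa eta lamT lamB i)) \is a fin_num.
  move=> n; apply: (@fin_of3 _ ((lamB 1 1 * pp lamB 1 n) ^+ 2) ((lamB i 1 * pp lamB i n) ^+ 2)).
    rewrite -(@x_decomp R kappa eta lamT lamB i n) //; apply: l2_iter => //; exact: ev_l2.
  exact: sqnorm_ge0.
have CAz : CA z.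
  apply: CA_of; apply: Hche; rewrite /in_l2.
  by have := finz 0%N; rewrite ge0_fin_numE // sqnorm_ge0.
have Hx : forall n, x n.+1 = lamB 1 1 ^+ 2 * b 1%N n + lamB i 1 ^+ 2 * b i n + z n.
  move=> n; rewrite /x (@x_decomp R kappa eta lamT lamB i n) // -(fineK (finz n)) -!EFinD /= bE // bE //.
  rewrite /z; ring.
pose c' := pp lamB i r / pp lamB 1 r.
have p1r : pp lamB 1 r != 0 by rewrite gt_eqF // (@pp_pos R eta lamB).
have Htail : forall d, pp lamB i (r + d) = c' * pp lamB 1 (r + d).
  elim=> [|d IH]; first by rewrite !addn0 /c' divfK.
  rewrite addnS /= IH Hflat //; first by ring.
  by rewrite -addn2 -addnA leq_addr.
have Hcore := @core R x (b 1%N) (b i) z (lamB 1 1 ^+ 2) (lamB i 1 ^+ 2) (c' ^+ 2) r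
  CAx (CAb 1%N (leqnn 1) He1) (CAb i Hi Hie) CAz.
have Heq : forall n, b i n = b 1%N n.
  apply: Hcore => //.
  - by apply: exprn_gt0; apply: HB.
  - by apply: exprn_gt0; apply: HB.
  - by rewrite bE //= expr1n.
  - by rewrite bE //= expr1n.
  move=> n Hn; rewrite !bE // -(subnKC Hn) Htail; ring.
have Hp : forall n, pp lamB i n = pp lamB 1 n.
  move=> n; apply/eqP; rewrite -(@eqrXn2 _ 2) // ?ltW ?(@pp_pos R eta lamB) //.
  by rewrite -!bE // Heq.
case: j Hj => [|[|n]] // _.
have := Hp n.+1; rewrite /= Hp; apply: mulIf.
by rewrite gt_eqF // (@pp_pos R eta lamB).
Qed.
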